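(* Let $p$ be a prime and $\mathcal H$ a finite relational structure. If $\mathcal H$ is congruence $p$-permutable, then $\mathcal H$ is strongly $p$-rectangular.
   Context: $\langle\mathcal H\rangle_p$ denotes the set of relations $p$-mpp-definable in $\mathcal H$, i.e. definable by formulas $\exists^{\equiv p}\mathbf y_1\cdots\exists^{\equiv p}\mathbf y_s\,\Phi$ with $\Phi$ a conjunction of atomic formulas over relations of $\mathcal H$ and equality, where $\exists^{\equiv p}\mathbf y\,\Psi(\mathbf x,\mathbf y)$ holds for $\mathbf a$ iff the number of $\mathbf b$ with $\Psi(\mathbf a,\mathbf b)$ is not divisible by $p$. For $\mathcal S\in\langle\mathcal H\rangle_p$ ($k$-ary), a $p$-congruence of $\mathcal S$ is a $2k$-ary relation in $\langle\mathcal H\rangle_p$ that is an equivalence relation on $\mathcal S$. For binary relations $\alpha,\beta$, $(\mathbf a,\mathbf b)\in\alpha\circ_p\beta$ iff the number of $\mathbf c$ with $(\mathbf a,\mathbf c)\in\alpha$ and $(\mathbf c,\mathbf b)\in\beta$ is not divisible by $p$. $\mathcal H$ is congruence $p$-permutable if $\alpha\circ_p\beta=\beta\circ_p\alpha$ for all $p$-congruences $\alpha,\beta$ of every $\mathcal S\in\langle\mathcal H\rangle_p$. A relation $\mathcal R$ of arity $n\ge2$ is rectangular if for every nonempty $I\subsetneq[n]$, whenever $(\mathbf a,\mathbf c),(\mathbf a,\mathbf d),(\mathbf b,\mathbf c)\in\mathcal R$ (with $\mathbf a,\mathbf b$ on coordinates $I$, $\mathbf c,\mathbf d$ on $[n]\setminus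 I$) also $(\mathbf b,\mathbf d)\in\mathcal R$. $\mathcal H$ is strongly $p$-rectangular if every relation of arity at least 2 in $\langle\mathcal H\rangle_p$ is rectangular. *)

(* Defs.v *)
From HB Require Import structures.
From mathcomp Require Import all_boot.

Set Implicit Arguments.
Unset Strict Implicit.
Unset Printing Implicit Defensive.

Record relstruct (D : finType) := RelStruct {
  sig_idx : finType;
  arity : sig_idx -> nat;
  rel : forall i : sig_idx, {set (arity i).-tuple D}
}.
Arguments arity {D} r i.
Arguments rel {D} r i.

Section MPP.
Variables (D : finType) (H : relstruct D) (p : nat).

Inductive atom (N : nat) : Type :=
| ARel (i : sig_idx H) (vs : (arity H i).-tuple 'I_N)
| AEq (x y : 'I_N).

(* ∃^{≡p} y_1 ... ∃^{≡p} y_s Φ, where each y_j is a tuple of k_j variables,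
   and Φ is a conjunction (list) of atoms over all variables in scope
   (the N free ones followed by the bound ones, in order). *)
Inductive mpp_formula (N : nat) : Type :=
| QF (Phi : seq (atom N))
| ExMod (k : nat) (f : mpp_formula (N + k)).

Definition atom_sat N (at_ : atom N) (a : N.-tuple D) : bool :=
  match at_ with
  | ARel i vs => [tuple of map (fun v => tnth a v) vs] \in rel H i
  | AEq x y => tnth a x == tnth a y
  end.

Fixpoint mpp_sat N (f : mpp_formula N) : N.-tuple D -> bool :=
  match f with
  | QF Phi => fun a => all (fun at_ => atom_sat at_ a) Phi
  | ExMod k g => fun a =>
      ~~ (p %| #|[set t : k.-tuple D | mpp_sat g (cat_tuple a t)]|)
  end.

Definition mpp_definable k (R : {set k.-tuple D}) : Prop :=
  exists f : mpp_formula k, forall a, (a \in R) = mpp_sat f a.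

Definition brel k (alpha : {set (k + k).-tuple D}) (a b : k.-tuple D) : bool :=
  cat_tuple a b \in alpha.

Definition p_congruence k (S : {set k.-tuple D}) (alpha : {set (k + k).-tuple D}) : Prop :=
  [/\ mpp_definable alpha,
      (forall a b, brel alpha a b -> (a \in S) && (b \in S)),
      (forall a, a \in S -> brel alpha a a),
      (forall a b, brel alpha a b -> brel alpha b a) &
      (forall a b c, brel alpha a b -> brel alpha b c -> brel alpha a c)].

Definition comp_p k (alpha beta : {set (k + k).-tuple D}) (a b : k.-tuple D) : bool :=
  ~~ (p %| #|[set c : k.-tuple D | brel alpha a c && brel beta c b]|).

Definition congruence_p_permutable : Prop :=
  forall k (S : {set k.-tuple D}) (alpha beta : {set (k + k).-tuple D}),
    mpp_definable S -> p_congruence S alpha -> p_congruence S beta ->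
    forall a b, comp_p alpha beta a b = comp_p beta alpha a b.

(* Rectangularity: for nonempty proper I ⊂ [n], writing tuples as (x on I, y
   on the complement): (a,c),(a,d),(b,c) ∈ R implies (b,d) ∈ R. *)
Definition rectangular n (R : {set n.-tuple D}) : Prop :=
  forall I : {set 'I_n}, I != set0 -> I != setT ->
  forall t_ac t_ad t_bc t_bd : n.-tuple D,
    (forall i, i \in I -> tnth t_ac i = tnth t_ad i) ->
    (forall i, i \in I -> tnth t_bc i = tnth t_bd i) ->
    (forall i, i \notin I -> tnth t_ac i = tnth t_bc i) ->
    (forall i, i \notin I -> tnth t_ad i = tnth t_bd i) ->
    t_ac \in R -> t_ad \in R -> t_bc \in R -> t_bd \in R.

Definition strongly_p_rectangular : Prop :=
  forall n (R : {set n.-tuple D}), 2 <= n -> mpp_definable R -> rectangular R.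

End MPP.

(* Main.v *)
Require Import Defs.
From HB Require Import structures.
From mathcomp Require Import all_boot.

Set Implicit Arguments.
Unset Strict Implicit.
Unset Printing Implicit Defensive.

Section Aux.
Variables (D : finType) (H : relstruct D) (p : nat).

Definition lift_ren N M k (s : 'I_N -> 'I_M) (i : 'I_(N + k)) : 'I_(M + k) :=
  match split i with inl j => lshift k (s j) | inr j => rshift M j end.

Definition rename_atom N M (s : 'I_N -> 'I_M) (a : atom H N) : atom H M :=
  match a with
  | ARel i vs => ARel (map_tuple s vs)
  | AEq x y => AEq H (s x) (s y)
  end.

Fixpoint rename N M (s : 'I_N -> 'I_M) (f : mpp_formula H N) : mpp_formula H M :=
  match f with
  | QF Phi => QF (map (rename_atom s) Phi)
  | ExMod k g => ExMod (rename (@lift_ren _ _ k s) g)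
  end.

Definition tsub N M (s : 'I_N -> 'I_M) (a : M.-tuple D) : N.-tuple D :=
  [tuple tnth a (s i) | i < N].

Lemma rename_atomE N M (s : 'I_N -> 'I_M) at_ a :
  atom_sat (rename_atom s at_) a = atom_sat at_ (tsub s a).
Proof.
case: at_ => [i vs|x y] /=; last by rewrite /tsub !tnth_mktuple.
set L := (X in X \in _); set R := (X in _ = (X \in _)).
have -> : L = R.
  apply: val_inj; rewrite /L /R /= -map_comp; apply: eq_map => v.
  by rewrite /tsub /= tnth_mktuple.
by [].
Qed.

Lemma tsub_lift N M k (s : 'I_N -> 'I_M) (a : M.-tuple D) (t : k.-tuple D) :
  tsub (@lift_ren _ _ k s) (cat_tuple a t) = cat_tuple (tsub s a) t.
Proof.
apply: eq_from_tnth => i; rewrite tnth_mktuple -(splitK i).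
case: (split i) => j; rewrite /lift_ren unsplitK /=.
  by rewrite !tnth_lshift tnth_mktuple.
by rewrite !tnth_rshift.
Qed.

Lemma renameE N M (s : 'I_N -> 'I_M) f a :
  mpp_sat p (rename s f) a = mpp_sat p f (tsub s a).
Proof.
elim: f M s a => [N' Phi|N' k g IH] M s a /=.
  by rewrite all_map; apply: eq_all => at_ /=; rewrite rename_atomE.
congr (~~ (_ %| _)); apply: eq_card => t; rewrite !inE IH.
by rewrite tsub_lift.
Qed.

Lemma tsub_lshift N k (a : N.-tuple D) (t : k.-tuple D) :
  tsub (@lshift N k) (cat_tuple a t) = a.
Proof. by apply: eq_from_tnth => i; rewrite tnth_mktuple tnth_lshift. Qed.

Fixpoint conjQF N (Phi : seq (atom H N)) (g : mpp_formula H N) : mpp_formula H N :=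
  match g with
  | QF Psi => QF (Phi ++ Psi)
  | ExMod k g1 => ExMod (conjQF (map (rename_atom (@lshift _ k)) Phi) g1)
  end.

Lemma conjQFE N (Phi : seq (atom H N)) g a :
  mpp_sat p (conjQF Phi g) a = all (fun at_ => atom_sat at_ a) Phi && mpp_sat p g a.
Proof.
elim: g Phi a => [N' Psi|N' k g1 IH] Phi a /=; first by rewrite all_cat.
have E t : mpp_sat p (conjQF (map (rename_atom (@lshift _ k)) Phi) g1) (cat_tuple a t)
   = all (fun at_ => atom_sat at_ a) Phi && mpp_sat p g1 (cat_tuple a t).
  by rewrite IH all_map; congr (_ && _); apply: eq_all => at_ /=; rewrite rename_atomE tsub_lshift.
case: (all _ Phi) E => /= E.
  by congr (~~ (_ %| _)); apply: eq_card => t; rewrite !inE E.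
by rewrite (eq_card (B := pred0)) ?card0 ?dvdn0 // => t; rewrite !inE E.
Qed.

Fixpoint conjF N (f : mpp_formula H N) (g : mpp_formula H N) : mpp_formula H N :=
  match f with
  | QF Phi => conjQF Phi g
  | ExMod k f1 => ExMod (conjF f1 (rename (@lshift _ k) g))
  end.

Lemma conjFE N (f g : mpp_formula H N) a :
  mpp_sat p (conjF f g) a = mpp_sat p f a && mpp_sat p g a.
Proof.
elim: f g a => [N' Phi|N' k f1 IH] g a /=; first by rewrite conjQFE.
have E t : mpp_sat p (conjF f1 (rename (@lshift _ k) g)) (cat_tuple a t)
   = mpp_sat p f1 (cat_tuple a t) && mpp_sat p g a.
  by rewrite IH renameE tsub_lshift.
case: (mpp_sat p g a) E => E.
  by rewrite andbT; congr (~~ (_ %| _)); apply: eq_card => t; rewrite !inE E andbT.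
by rewrite andbF (eq_card (B := pred0)) ?card0 ?dvdn0 // => t; rewrite !inE E andbF.
Qed.

Lemma tsub_rshift N k (a : N.-tuple D) (t : k.-tuple D) :
  tsub (@rshift N k) (cat_tuple a t) = t.
Proof. by apply: eq_from_tnth => i; rewrite tnth_mktuple tnth_rshift. Qed.

Section Alpha.
Variables (n : nat) (R : {set n.-tuple D}) (fR : mpp_formula H n).
Hypothesis hR : forall a, (a \in R) = mpp_sat p fR a.

Definition agreeF (J : {set 'I_n}) : mpp_formula H (n + n) :=
  QF [seq AEq H (lshift n i) (rshift n i) | i <- enum J].

Definition alphaF J := conjF (rename (@lshift n n) fR)
   (conjF (rename (@rshift n n) fR) (agreeF J)).

Definition alpha J := [set t | mpp_sat p (alphaF J) t].

Lemma brel_alpha J x y : brel (alpha J) x y =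
  [&& x \in R, y \in R & [forall i in J, tnth x i == tnth y i]].
Proof.
rewrite /brel inE /alphaF !conjFE !renameE tsub_lshift tsub_rshift -!hR.
congr [&& _, _ & _]; rewrite /= all_map.
apply/allP/forall_inP => Hi i.
  by move=> iJ; have := Hi i; rewrite mem_enum /= tnth_lshift tnth_rshift; apply.
by rewrite mem_enum /= tnth_lshift tnth_rshift => /Hi.
Qed.

Lemma alpha_cong J : mpp_definable H p (alpha J) -> p_congruence H p R (alpha J).
Proof.
move=> hd; split => //.
- by move=> a b; rewrite brel_alpha => /and3P [-> ->].
- by move=> a aR; rewrite brel_alpha aR; apply/forall_inP.
- move=> a b; rewrite !brel_alpha => /and3P [-> -> /forall_inP h].
  by apply/forall_inP => i /h /eqP ->.
- move=> a b c; rewrite !brel_alpha => /and3P [-> _ /forall_inP h1] /and3P [_ -> /forall_inP h2].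
  by apply/forall_inP => i iJ; rewrite (eqP (h1 i iJ)) (h2 i iJ).
Qed.

Lemma alpha_def J : mpp_definable H p (alpha J).
Proof. by exists (alphaF J) => a; rewrite inE. Qed.

End Alpha.

End Aux.

Theorem lemma6p4 (p : nat) (D : finType) (H : relstruct D) :
  prime p -> congruence_p_permutable H p -> strongly_p_rectangular H p.
Proof.
move=> pp hperm n R _ [fR hR] I _ _ tac tad tbc tbd h1 h2 h3 h4 Rac Rad Rbc.
pose a1 := alpha p fR I; pose a2 := alpha p fR (~: I).
have c1 : p_congruence H p R a1 by apply: alpha_cong => //; apply: alpha_def.
have c2 : p_congruence H p R a2 by apply: alpha_cong => //; apply: alpha_def.
have hc := hperm n R a1 a2 (ex_intro _ fR hR) c1 c2 tad tbc.
have L : comp_p p a1 a2 tad tbc.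
  rewrite /comp_p (_ : [set c | _] = [set tac]) ?cards1 ?dvdn1.
    by apply/eqP => e; move: (prime_gt1 pp); rewrite e.
  apply/setP => c; rewrite !inE !(brel_alpha hR).
  apply/idP/idP.
    move=> /andP [/and3P [_ cR /forall_inP e1] /and3P [_ _ /forall_inP e2]].
    apply/eqP/eq_from_tnth => i; case: (boolP (i \in I)) => iI.
      by rewrite (h1 i iI) (eqP (e1 i iI)).
    by rewrite (h3 i iI) (eqP (e2 i _)) // inE.
  move/eqP => ->; rewrite Rac Rad Rbc /=; apply/andP; split; apply/forall_inP => i.
    by move=> iI; rewrite (h1 i iI).
  by rewrite inE => iI; rewrite (h3 i iI).
move: L; rewrite hc /comp_p; case: (set_0Vmem [set c | brel a2 tad c && brel a1 c tbc]).
  by move=> ->; rewrite cards0 dvdn0.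
move=> [c]; rewrite !inE !(brel_alpha hR).
move=> /andP [/and3P [_ cR /forall_inP e1] /and3P [_ _ /forall_inP e2]] _.
suff -> : tbd = c by [].
apply/eq_from_tnth => i; case: (boolP (i \in I)) => iI.
  by rewrite -(h2 i iI) (eqP (e2 i iI)).
by rewrite -(h4 i iI) (eqP (e1 i _)) // inE.
Qed.
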